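(* Let $f$ and $g$ be multiplicative functions such that $S_f(x)\ll x^\alpha$, and suppose that $\hat{\mathbb{D}}_{\beta,k}(f,g)<\infty$ for some $\beta$ and some positive integer $k$. Suppose additionally that $f(n)=o(n^\delta)$ and $g(n)=o(n^\delta)$ for some $\delta>0$. Let $h$ be defined by $g=f*h$. If $\sigma>1/(k+1)+\delta$ is such that $\sigma\ge\max(\alpha,\beta)$, then there is $Y>0$ such that if $\hat H_Y(\sigma)$ is convergent, then $S_g(x)\ll x^\sigma$.
   Context: $S_f(x):=\sum_{n\le x}f(n)$. For multiplicative $f,g$ (not necessarily bounded), $\hat{\mathbb{D}}_{\beta,k}(f,g):=\sum_p\sum_{j=1}^k\frac{|f(p^j)-g(p^j)|}{p^{j\beta}}$ (sum over primes); $f,g$ are called $(\beta,k)$-strongly pretentious if this is finite. $(f*h)(n)=\sum_{dm=n}f(d)h(m)$. $\hat H_Y(\sigma):=\sum_{p\le Y}\sum_{k=1}^\infty\frac{|h(p^k)|}{p^{k\sigma}}$. *)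

(* Defs.v *)
From HB Require Import structures.
From mathcomp Require Import all_boot all_order all_algebra.
From mathcomp Require Import complex.
From mathcomp Require Import all_classical all_reals all_analysis.
Set Implicit Arguments. Unset Strict Implicit. Unset Printing Implicit Defensive.
Import Order.TTheory GRing.Theory Num.Theory.
Local Open Scope ring_scope.

Section Defs.
Variable R : realType.

(* multiplicative arithmetic function (the value at 0 is irrelevant) *)
Definition mult_fun (f : nat -> R[i]) : Prop :=
  f 1%N = 1 /\ forall m n : nat, (0 < m)%N -> (0 < n)%N -> coprime m n ->
    f (m * n)%N = f m * f n.

Definition Ssum (f : nat -> R[i]) (x : R) : R[i] :=
  \sum_(1 <= n < (Num.truncn x).+1) f n.

Definition dconv (f h : nat -> R[i]) (n : nat) : R[i] :=
  \sum_(d <- divisors n) f d * h (n %/ d)%N.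

Definition Sbound (f : nat -> R[i]) (a : R) : Prop :=
  exists C : R, forall x : R, 1 <= x -> Normc.normc (Ssum f x) <= C * x `^ a.

Definition little_o_pow (f : nat -> R[i]) (d : R) : Prop :=
  forall eps : R, 0 < eps -> exists N : nat, forall n : nat, (N <= n)%N ->
    Normc.normc (f n) <= eps * (n%:R) `^ d.

(* hat D_{beta,k}(f,g) < oo : the (nonnegative) series over primes p of
   sum_{j=1}^k |f(p^j) - g(p^j)| / p^{j beta} has bounded partial sums *)
Definition strongly_pretentious (beta : R) (k : nat) (f g : nat -> R[i]) : Prop :=
  exists B : R, forall N : nat,
    \sum_(p < N | prime p)
       \sum_(1 <= j < k.+1) Normc.normc (f (p ^ j)%N - g (p ^ j)%N) / (p%:R) `^ (j%:R * beta)
    <= B.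

(* hat H_Y(sigma) = sum_{p <= Y} sum_{k >= 1} |h(p^k)| / p^{k sigma} is
   convergent: the (nonnegative) series has bounded partial sums *)
Definition Hhat_convergent (h : nat -> R[i]) (Y sigma : R) : Prop :=
  exists B : R, forall K : nat,
    \sum_(p < (Num.truncn Y).+1 | prime p)
       \sum_(1 <= j < K) Normc.normc (h (p ^ j)%N) / (p%:R) `^ (j%:R * sigma)
    <= B.

End Defs.

(* Main.v *)
Require Import Defs.
From HB Require Import structures.
From mathcomp Require Import all_boot all_order all_algebra.
From mathcomp Require Import complex.
From mathcomp Require Import all_classical all_reals all_analysis.
From mathcomp Require Import lra zify ring.
Import Order.TTheory GRing.Theory Num.Theory.
Local Open Scope ring_scope.

Section Gen.
Variable R : realType.

Lemma nc_ge0 (x : R[i]) : 0 <= Normc.normc x.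
Proof. by case: x => a b /=; apply: sqrtr_ge0. Qed.

Lemma nc_add (x y : R[i]) : Normc.normc (x + y) <= Normc.normc x + Normc.normc y.
Proof. exact: (le_normcD x y). Qed.

Lemma nc_opp (x : R[i]) : Normc.normc (- x) = Normc.normc x.
Proof. exact: (normcN x). Qed.

Lemma nc_sum (I : Type) (s : seq I) (P : pred I) (F : I -> R[i]) :
  Normc.normc (\sum_(i <- s | P i) F i) <= \sum_(i <- s | P i) Normc.normc (F i).
Proof.
elim: s => [|x s IH]; first by rewrite !big_nil Normc.normc0.
rewrite !big_cons; case: (P x) => //.
by apply: le_trans (nc_add _ _) _; rewrite lerD2l.
Qed.

Lemma sub_uniq_le (T : eqType) (s t : seq T) (G : T -> R) :
  uniq s -> uniq t -> {subset s <= t} -> (forall x, x \in t -> 0 <= G x) ->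
  \sum_(x <- s) G x <= \sum_(x <- t) G x.
Proof.
move=> us ut st G0.
rewrite [X in _ <= X](bigID (fun x => x \in s)) /=.
have -> : \sum_(i <- t | i \in s) G i = \sum_(x <- s) G x.
  rewrite -big_filter; apply: perm_big.
  apply: uniq_perm; rewrite ?filter_uniq //.
  by move=> x; rewrite mem_filter; case xs: (x \in s) => //=; rewrite st.
rewrite lerDl big_seq_cond; apply: sumr_ge0 => x /andP[xt _]; exact: G0.
Qed.

Lemma inj_sum_le (T U : eqType) (s : seq T) (t : seq U) (phi : T -> U) (G : U -> R) :
  uniq s -> uniq t -> {in s &, injective phi} -> (forall x, x \in s -> phi x \in t) ->
  (forall y, y \in t -> 0 <= G y) ->
  \sum_(x <- s) G (phi x) <= \sum_(y <- t) G y.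
Proof.
move=> us ut inj st G0; rewrite -(big_map phi xpredT G).
apply: sub_uniq_le => //; first by rewrite map_inj_in_uniq.
by move=> y /mapP[x xs ->]; apply: st.
Qed.

End Gen.

Lemma divisors_mul m n : (0 < m)%N -> (0 < n)%N -> coprime m n ->
  perm_eq (divisors (m * n)) [seq (d1 * d2)%N | d1 <- divisors m, d2 <- divisors n].
Proof.
move=> m0 n0 cmn.
have mn0 : (0 < m * n)%N by rewrite muln_gt0 m0.
apply: uniq_perm; first exact: divisors_uniq.
- apply: allpairs_uniq; try exact: divisors_uniq.
  move=> [x1 y1] [x2 y2] /allpairsP[[a b] /= [ha hb [-> ->]]]
     /allpairsP[[c e] /= [hc he [-> ->]]] /= H.
  rewrite -!dvdn_divisors // in ha hb hc he.
  have E1 : forall x y, (x %| m)%N -> (y %| n)%N -> gcdn m (x * y) = x.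
    move=> x y xm yn; rewrite Gauss_gcdl; first exact/gcdn_idPr.
    exact: (coprime_dvdr yn cmn).
  have E2 : forall x y, (x %| m)%N -> (y %| n)%N -> gcdn n (x * y) = y.
    move=> x y xm yn; rewrite Gauss_gcdr; first exact/gcdn_idPr.
    by rewrite coprime_sym; exact: (coprime_dvdl xm cmn).
  have ac : a = c by rewrite -(E1 a b) // H E1.
  by rewrite ac in H *; congr pair; rewrite -(E2 c b) // H E2.
move=> d; apply/idP/idP.
- rewrite -dvdn_divisors // => dmn.
  apply/allpairsP; exists (gcdn d m, gcdn d n) => /=.
  rewrite -!dvdn_divisors // !dvdn_gcdr; split => //.
  apply/eqP; rewrite eqn_dvd; apply/andP; split.
    have h1 : (d %| m * gcdn d n)%N.
      by rewrite muln_gcdr dvdn_gcd dvdn_mull ?dvdnn.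
    by rewrite muln_gcdl dvdn_gcd h1 dvdn_mulr.
  rewrite Gauss_dvd ?dvdn_gcdl //.
  apply: coprime_dvdl (dvdn_gcdr _ _) _.
  by rewrite coprime_sym; apply: coprime_dvdl (dvdn_gcdr _ _) _; rewrite coprime_sym.
- move=> /allpairsP[[a b] /= [ha hb ->]].
  by rewrite -!dvdn_divisors // in ha hb *; apply: dvdn_mul.
Qed.

Lemma divisors_pow p j : prime p ->
  perm_eq (divisors (p ^ j)) [seq (p ^ i)%N | i <- iota 0 j.+1].
Proof.
move=> pp; have pj0 : (0 < p ^ j)%N by rewrite expn_gt0 prime_gt0.
apply: uniq_perm; first exact: divisors_uniq.
  rewrite map_inj_uniq ?iota_uniq //; apply: expnI; exact: prime_gt1.
move=> d; rewrite -dvdn_divisors //; apply/idP/idP.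
  by move/(dvdn_pfactor d j pp) => [i ij ->]; apply: map_f; rewrite mem_iota.
case/mapP => i; rewrite mem_iota /= => ij ->.
by apply/(dvdn_pfactor _ _ pp); exists i.
Qed.

Lemma divisors1 : divisors 1 = [:: 1%N].
Proof. by []. Qed.

Section HProps.
Variable R : realType.
Variables f g h : nat -> R[i].
Hypothesis hf : mult_fun f.
Hypothesis hg : mult_fun g.
Hypothesis hc : forall n : nat, (0 < n)%N -> g n = dconv f h n.

Lemma h1 : h 1%N = 1.
Proof.
have := @hc 1%N (ltnSn 0); rewrite /dconv divisors1 big_seq1 divnn /=.
by case: hf => -> _; case: hg => -> _; rewrite mul1r.
Qed.

Lemma divnMM m n d1 d2 : (d1 %| m)%N -> (d2 %| n)%N -> (0 < d1)%N -> (0 < d2)%N ->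
  ((m * n) %/ (d1 * d2) = (m %/ d1) * (n %/ d2))%N.
Proof.
move=> d1m d2n d10 d20.
by rewrite -{1}(divnK d1m) -{1}(divnK d2n) mulnACA mulnK // muln_gt0 d10.
Qed.

Lemma hmul_aux N : forall m n, (m * n < N)%N -> (0 < m)%N -> (0 < n)%N -> coprime m n ->
  h (m * n)%N = h m * h n.
Proof.
elim: N => [//|N IH] m n mnN m0 n0 cmn.
have mn0 : (0 < m * n)%N by rewrite muln_gt0 m0.
have key : g (m * n)%N = h (m * n)%N - h m * h n + g m * g n.
  rewrite hc // /dconv (perm_big _ (@divisors_mul m n m0 n0 cmn)) big_allpairs_dep /=.
  rewrite (@hc m m0) (@hc n n0) /dconv mulr_suml.
  have E : forall d1 d2, d1 \in divisors m -> d2 \in divisors n ->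
    f (d1 * d2)%N * h ((m * n) %/ (d1 * d2))%N =
    (f d1 * h (m %/ d1)%N) * (f d2 * h (n %/ d2)%N) +
    (if (d1 == 1%N) && (d2 == 1%N) then h (m * n)%N - h m * h n else 0).
    move=> d1 d2; rewrite -!dvdn_divisors // => d1m d2n.
    have d10 := dvdn_gt0 m0 d1m; have d20 := dvdn_gt0 n0 d2n.
    case: ifP => [/andP[/eqP -> /eqP ->]|ne].
      by rewrite !divn1 muln1; case: hf => -> _; rewrite !mul1r addrC subrK.
    have c12 : coprime d1 d2 by apply: (coprime_dvdl d1m); exact: (coprime_dvdr d2n cmn).
    have lt12 : (1 < d1 * d2)%N.
      by rewrite ltn_neqAle muln_gt0 d10 d20 andbT eq_sym muln_eq1 ne.
    rewrite addr0 divnMM // IH //.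
    + by case: hf => _ ->; rewrite // mulrACA.
    + by rewrite -divnMM //; apply: leq_trans (ltn_Pdiv lt12 mn0) _; rewrite -ltnS.
    + by rewrite divn_gt0 // dvdn_leq.
    + by rewrite divn_gt0 // dvdn_leq.
    + apply: (coprime_dvdl (@dvdn_div d1 m d1m)); exact: (coprime_dvdr (@dvdn_div d2 n d2n) cmn).
  rewrite (eq_big_seq (fun d1 => \sum_(d2 <- divisors n)
     ((f d1 * h (m %/ d1)%N) * (f d2 * h (n %/ d2)%N) +
    (if (d1 == 1%N) && (d2 == 1%N) then h (m * n)%N - h m * h n else 0)))); last first.
    by move=> d1 d1m; apply: eq_big_seq => d2 d2n; apply: E.
  rewrite (eq_bigr (fun d1 => (f d1 * h (m %/ d1)%N) * \sum_(d2 <- divisors n) (f d2 * h (n %/ d2)%N) + \sum_(d2 <- divisors n) (if (d1 == 1%N) && (d2 == 1%N) then h (m * n)%N - h m * h n else 0))); last first.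
    by move=> d1 _; rewrite big_split /= mulr_sumr.
  rewrite big_split /= addrC; congr (_ + _).
  rewrite (bigD1_seq 1%N) ?divisor1 ?divisors_uniq //= (bigD1_seq 1%N) ?divisor1 ?divisors_uniq //=.
  rewrite [X in _ + X + _]big1; last by move=> i /negPf ->.
  rewrite addr0 [X in _ + X]big1 ?addr0 // => i /negPf ->; rewrite big1 //.
have H : g (m * n)%N = g m * g n by case: hg => _ ->.
rewrite key in H.
apply/eqP; rewrite -subr_eq0; apply/eqP.
by apply: (addIr (g m * g n)); rewrite add0r.
Qed.

Lemma hmul m n : (0 < m)%N -> (0 < n)%N -> coprime m n -> h (m * n)%N = h m * h n.
Proof. by apply: (@hmul_aux (m * n).+1). Qed.

Lemma hpow p j : prime p ->
  g (p ^ j)%N = \sum_(i < j.+1) f (p ^ i)%N * h (p ^ (j - i))%N.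
Proof.
move=> pp; have p0 := prime_gt0 pp.
rewrite hc ?expn_gt0 ?p0 // /dconv (perm_big _ (@divisors_pow p j pp)) big_map.
rewrite -(big_mkord xpredT (fun i => f (p ^ i)%N * h (p ^ (j - i))%N)).
rewrite /index_iota subn0; apply: eq_big_seq => i; rewrite mem_iota /= => ij.
by rewrite -expnB.
Qed.

End HProps.

Section Euler.
Variable R : realType.
Variable a : nat -> R.
Hypothesis a1 : a 1%N = 1.
Hypothesis a0 : forall m, 0 <= a m.
Hypothesis amul : forall m n, (0 < m)%N -> (0 < n)%N -> coprime m n -> a (m * n)%N = a m * a n.
Variable M : nat.

Lemma euler_aux n :
  \sum_(m <- [seq x <- iota 1 M | all (fun q => (q < n)%N) (primes x)]) a m <=
  \prod_(p < n | prime p) (\sum_(j <- iota 0 M.+1) a (p ^ j)%N).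
Proof.
elim: n => [|n IH].
  rewrite big_ord0.
  apply: le_trans (_ : \sum_(m <- [:: 1%N]) a m <= 1); last by rewrite big_seq1 a1.
  apply: sub_uniq_le => //; first by rewrite filter_uniq ?iota_uniq.
    move=> x; rewrite mem_filter mem_iota => /andP[hx /andP[x1 _]].
    have : primes x = [::].
      by case: (primes x) hx => // q s /=.
    move/eqP; rewrite primes_eq0 => x2; rewrite inE; apply/eqP; lia.
rewrite [X in _ <= X]big_mkcond big_ord_recr /= -big_mkcond /=.
case: (boolP (prime n)) => pn; last first.
  rewrite mulr1; apply: le_trans IH; rewrite le_eqVlt; apply/orP; left; apply/eqP.
  congr (\sum_(m <- _) _); apply: eq_filter => x; apply: eq_in_all => q.
  rewrite mem_primes => /and3P[pq _ _]; rewrite ltnS leq_eqVlt.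
  by case: eqP => // qn; move: pn; rewrite -qn pq.
set s := [seq x <- iota 1 M | all (fun q => (q < n.+1)%N) (primes x)].
set s' := [seq x <- iota 1 M | all (fun q => (q < n)%N) (primes x)].
set t := [seq (j, m') | j <- iota 0 M.+1, m' <- s'].
have n1 : (1 < n)%N by apply: prime_gt1.
have n0 : (0 < n)%N by apply: prime_gt0.
pose phi (m : nat) := (logn n m, (m %/ n ^ logn n m)%N).
pose G (x : nat * nat) := a (n ^ x.1)%N * a x.2.
have dec : forall m, (0 < m)%N -> m = (n ^ logn n m * (m %/ n ^ logn n m))%N.
  by move=> m m0; rewrite mulnC divnK // pfactor_dvdnn.
have ndiv : forall m, (0 < m)%N -> ~~ (n %| m %/ n ^ logn n m)%N.
  move=> m m0; apply/negP => H.
  have m'0 : (0 < m %/ n ^ logn n m)%N by rewrite divn_gt0 ?expn_gt0 ?n0 // dvdn_leq // pfactor_dvdnn.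
  have : (0 < logn n (m %/ n ^ logn n m))%N by rewrite logn_gt0 mem_primes pn m'0 H.
  by rewrite logn_div ?pfactor_dvdnn // pfactorK // subnn.
have eqa : forall m, m \in s -> a m = G (phi m).
  move=> m; rewrite mem_filter mem_iota => /andP[_ /andP[m0 _]].
  rewrite /G /phi /= {1}(dec m m0) amul ?expn_gt0 ?n0 //.
    by rewrite divn_gt0 ?expn_gt0 ?n0 // dvdn_leq // pfactor_dvdnn.
  by apply: coprimeXl; rewrite prime_coprime // ndiv.
rewrite (eq_big_seq _ eqa).
apply: le_trans (_ : \sum_(y <- t) G y <= _).
  apply: inj_sum_le.
  - by rewrite filter_uniq ?iota_uniq.
  - apply: allpairs_uniq; rewrite ?filter_uniq ?iota_uniq //.
    by move=> [x1 y1] [x2 y2] _ _ /=.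
  - move=> x y; rewrite !mem_filter !mem_iota => /andP[_ /andP[x0 _]] /andP[_ /andP[y0 _]].
    by move=> [e1 e2]; rewrite (dec x x0) (dec y y0) e2 e1.
  - move=> m; rewrite mem_filter mem_iota => /andP[hm /andP[m0 mM]].
    have m'0 : (0 < m %/ n ^ logn n m)%N by rewrite divn_gt0 ?expn_gt0 ?n0 // dvdn_leq // pfactor_dvdnn.
    apply: allpairs_f.
      rewrite mem_iota /= add0n ltnS.
      apply: leq_trans (ltnW (ltn_expl _ n1)) _.
      apply: leq_trans (dvdn_leq m0 (pfactor_dvdnn _ _)) _; lia.
    rewrite mem_filter mem_iota m'0 /=; apply/andP; split; last first.
      by apply: leq_ltn_trans (leq_div _ _) _.
    apply/allP => q qp.
    have : q \in primes m.
      move: qp; rewrite !mem_primes => /and3P[-> _ qd]; rewrite m0 /=.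
      by apply: dvdn_trans qd _; apply: dvdn_div; apply: pfactor_dvdnn.
    move/(allP hm); rewrite ltnS leq_eqVlt => /orP[/eqP qn|//].
    move: qp; rewrite mem_primes qn => /and3P[_ _ H].
    by move: (ndiv m m0); rewrite H.
  - by move=> y _; rewrite /G mulr_ge0.
rewrite big_allpairs /G /=.
rewrite (eq_bigr (fun j => a (n ^ j)%N * \sum_(m' <- s') a m')); last first.
  by move=> j _; rewrite mulr_sumr.
rewrite -mulr_suml mulrC; apply: ler_wpM2r.
  by apply: sumr_ge0 => j _; apply: a0.
exact: IH.
Qed.

End Euler.

Section Ana.
Variable R : realType.

Lemma sum_range_le (a b c : nat) (F : nat -> R) : (b <= c)%N -> (forall i, 0 <= F i) ->
  \sum_(a <= i < b) F i <= \sum_(a <= i < c) F i.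
Proof.
move=> bc F0; case: (leqP a b) => ab.
  rewrite (big_cat_nat ab bc) /= lerDl; exact: sumr_ge0.
rewrite big_geq ?(ltnW ab) //; exact: sumr_ge0.
Qed.

Lemma sum_pred_le (I : Type) (r : seq I) (P : pred I) (F : I -> R) : (forall i, 0 <= F i) ->
  \sum_(i <- r | P i) F i <= \sum_(i <- r) F i.
Proof.
move=> F0; rewrite big_mkcond /=; apply: ler_sum => i _; case: (P i) => //.
Qed.

Lemma geo_le (x : R) n : 0 <= x < 1 -> \sum_(i < n) x ^+ i <= (1 - x)^-1.
Proof.
move=> /andP[x0 x1]; have hx : 0 < 1 - x by rewrite subr_gt0.
elim: n => [|n IH]; first by rewrite big_ord0 invr_ge0 ltW.
rewrite big_ord_recl expr0.
rewrite (eq_bigr (fun i : 'I_n => x * x ^+ i)); last by move=> i _; rewrite exprS.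
rewrite -mulr_sumr.
apply: le_trans (_ : 1 + x * (1 - x)^-1 <= _).
  by rewrite lerD2l ler_wpM2l.
rewrite -[X in X + _](divff (lt0r_neq0 hx)) -mulrDl.
by rewrite subrK mul1r.
Qed.

Lemma powR_natX (x r : R) m : 0 <= x -> (x ^+ m) `^ r = (x `^ r) ^+ m.
Proof.
move=> x0; rewrite -powR_mulrn // powRAC powR_mulrn //; exact: powR_ge0.
Qed.

Lemma powR_nat_pow (p j : nat) (r : R) : ((p ^ j)%N%:R) `^ r = (p%:R `^ r) ^+ j.
Proof. by rewrite natrX powR_natX. Qed.

Lemma powR_mul_nat (p j : nat) (r : R) : (p%:R) `^ (j%:R * r) = (p%:R `^ r) ^+ j.
Proof. by rewrite powRrM powR_mulrn // -powR_natX. Qed.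

Lemma prod_le_exp (I : Type) (r : seq I) (P : pred I) (X : I -> R) : (forall i, 0 <= X i) ->
  \prod_(i <- r | P i) (1 + X i) <= expR (\sum_(i <- r | P i) X i).
Proof.
move=> X0; rewrite expR_sum; apply: ler_prod => i _.
by rewrite expR_ge1Dx andbT addr_ge0.
Qed.

Lemma zeta_bound (s : R) : 1 < s -> exists B : R, forall N : nat,
  \sum_(1 <= n < N) (n%:R `^ s)^-1 <= B.
Proof.
move=> s1; set t : R := 2 `^ (1 - s).
have t0 : 0 <= t by apply: powR_ge0.
have t1 : t < 1.
  rewrite /t /powR (negbTE (lt0r_neq0 _)) ?ltr0n // expR_lt1.
  by rewrite pmulr_llt0 ?ln_gt0 ?ltr1n // subr_lt0.
exists (1 - t)^-1 => N.
have Fge0 : forall n : nat, 0 <= (n%:R `^ s : R)^-1 by move=> n; rewrite invr_ge0 powR_ge0.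
have key : forall m, \sum_(1 <= n < 2 ^ m) (n%:R `^ s : R)^-1 <= \sum_(i < m) t ^+ i.
  elim=> [|m IH]; first by rewrite expn0 big_geq // big_ord0.
  have h1 : (1 <= 2 ^ m)%N by rewrite expn_gt0.
  have h2 : (2 ^ m <= 2 ^ m.+1)%N by rewrite leq_exp2l.
  rewrite (big_cat_nat h1 h2) big_ord_recr /=; apply: lerD => //.
  apply: le_trans (_ : \sum_(2 ^ m <= n < 2 ^ m.+1) (((2 ^ m)%N%:R `^ s : R)^-1) <= _).
    rewrite big_nat_cond [X in _ <= X]big_nat_cond.
    apply: ler_sum => n /andP[/andP[hn _] _].
    have p0 : (0 < (2 ^ m)%N%:R :> R) by rewrite ltr0n expn_gt0.
    rewrite lef_pV2 ?posrE ?powR_gt0 //; last by apply: lt_le_trans p0 _; rewrite ler_nat.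
    apply: ge0_ler_powR; rewrite ?nnegrE ?ler_nat //; lra.
  rewrite sumr_const_nat.
  have -> : (2 ^ m.+1 - 2 ^ m = 2 ^ m)%N by rewrite expnS mul2n -addnn addnK.
  have E : t ^+ m = ((2 ^ m)%N%:R) `^ (1 - s) by rewrite powR_nat_pow.
  rewrite E powRB; last by rewrite pnatr_eq0 expn_eq0 implybT.
  by rewrite powRr1 ?ler0n // [X in _ <= X]mulrC mulr_natr.
apply: le_trans (sum_range_le 1 _ _ _ (ltnW (@ltn_expl 2 N isT)) Fge0) _.
apply: le_trans (key N) _; apply: geo_le; by rewrite t0.
Qed.

End Ana.

Section Local.
Variable R : realType.

Lemma sum_lower_le (a b c : nat) (F : nat -> R) : (a <= b)%N -> (forall i, 0 <= F i) ->
  \sum_(b <= i < c) F i <= \sum_(a <= i < c) F i.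
Proof.
move=> ab F0; case: (leqP b c) => bc.
  rewrite (big_cat_nat ab bc) /= lerDr; exact: sumr_ge0.
rewrite big_geq ?(ltnW bc) //; exact: sumr_ge0.
Qed.

Lemma conv_le (a u : nat -> R) K : (forall j, 0 <= u j) -> (forall j, 0 <= a j) ->
  \sum_(1 <= j < K) \sum_(1 <= i < j) a i * u (j - i)%N <=
  (\sum_(1 <= i < K) a i) * (\sum_(1 <= l < K) u l).
Proof.
move=> u0 a0.
rewrite (eq_big_nat _ _ (F2 := fun j => \sum_(1 <= i < K) (if (i < j)%N then a i * u (j - i)%N else 0))); last first.
  move=> j /andP[_ jK]; rewrite (big_nat_widen _ _ _ _ _ (ltnW jK)) big_mkcond /=.
  by apply: eq_bigr => i _.
rewrite exchange_big_nat /= mulr_suml; apply: ler_sum_nat => i /andP[i1 iK].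
rewrite -big_mkcond /= -mulr_sumr; apply: ler_wpM2l => //.
rewrite -[X in X <= _]big_filter.
apply: (@inj_sum_le R _ _ _ _ (fun j => (j - i)%N) u).
- by rewrite filter_uniq // iota_uniq.
- exact: iota_uniq.
- move=> x y; rewrite !mem_filter => /andP[xi _] /andP[yi _] E; lia.
- move=> x; rewrite mem_filter !mem_iota => /andP[xi /andP[x1 xK]]; apply/andP; split; lia.
- by move=> y _.
Qed.

Lemma local_bound (u a d : nat -> R) (eps r : R) (k K : nat) :
  0 <= eps <= 1/4 -> 0 <= r <= 1/2 ->
  (forall j, 0 <= u j) -> (forall j, 0 <= a j) -> (forall j, 0 <= d j) ->
  (forall i, (1 <= i)%N -> a i <= eps * r ^+ i) ->
  (forall j, (k < j)%N -> d j <= 2 * eps * r ^+ j) ->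
  (forall j, (1 <= j)%N -> u j <= d j + \sum_(1 <= i < j) a i * u (j - i)%N) ->
  \sum_(1 <= j < K) u j <= 2 * \sum_(1 <= j < k.+1) d j + 2 * r ^+ k.+1.
Proof.
move=> /andP[e0 e1] /andP[r0 r1] u0 a0 d0 ha hd hu.
set U := \sum_(1 <= j < K) u j.
set D := \sum_(1 <= j < K) d j.
set A := \sum_(1 <= i < K) a i.
have geo : forall n, \sum_(0 <= i < n) r ^+ i <= 2.
  move=> n; rewrite big_mkord; apply: (le_trans (@geo_le R r n _)); first by apply/andP; split; lra.
  rewrite -[2]invrK lef_pV2 ?posrE; lra.
have s1 : U <= D + \sum_(1 <= j < K) \sum_(1 <= i < j) a i * u (j - i)%N.
  rewrite /U /D -big_split /= big_nat_cond [X in _ <= X]big_nat_cond.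
  by apply: ler_sum => j /andP[/andP[j1 _] _]; apply: hu.
have s2 := @conv_le a u K u0 a0.
rewrite -/A -/U in s2.
have hA : A <= 1/2.
  apply: le_trans (_ : \sum_(1 <= i < K) eps * r ^+ i <= _).
    by rewrite /A big_nat_cond [X in _ <= X]big_nat_cond; apply: ler_sum => i /andP[/andP[i1 _] _]; apply: ha.
  rewrite -mulr_sumr; apply: le_trans (_ : eps * 2 <= _); last lra.
  apply: ler_wpM2l => //; apply: le_trans (geo K).
  apply: sum_lower_le => // i; exact: exprn_ge0.
have U0 : 0 <= U by apply: sumr_ge0 => j _.
have A0 : 0 <= A by apply: sumr_ge0 => j _.
have AU : A * U <= 1/2 * U by apply: ler_wpM2r.
have UD : U <= 2 * D by lra.
have rk0 : 0 <= r ^+ k.+1 by apply: exprn_ge0.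
have DD : D <= \sum_(1 <= j < k.+1) d j + r ^+ k.+1.
  set L := maxn K k.+1.
  apply: le_trans (_ : \sum_(1 <= j < L) d j <= _).
    by apply: sum_range_le => //; rewrite leq_maxl.
  have h1 : (1 <= k.+1)%N by [].
  have h2 : (k.+1 <= L)%N by rewrite leq_maxr.
  rewrite (big_cat_nat h1 h2) /= lerD2l.
  apply: le_trans (_ : \sum_(k.+1 <= j < L) 2 * eps * r ^+ j <= _).
    by rewrite big_nat_cond [X in _ <= X]big_nat_cond; apply: ler_sum => j /andP[/andP[j1 _] _]; apply: hd.
  rewrite -mulr_sumr -{1}(add0n k.+1) big_addn.
  rewrite (eq_bigr (fun i => r ^+ i * r ^+ k.+1)); last by move=> i _; rewrite exprD.
  rewrite -mulr_suml.
  have := geo (L - k.+1)%N => G.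
  have : (\sum_(0 <= i < L - k.+1) r ^+ i) * r ^+ k.+1 <= 2 * r ^+ k.+1 by apply: ler_wpM2r.
  move=> H; apply: le_trans (_ : 2 * eps * (2 * r ^+ k.+1) <= _).
    by apply: ler_wpM2l => //; apply: mulr_ge0.
  nra.
lra.
Qed.
End Local.

Section PrimeLocal.
Variable R : realType.
Variables f g h : nat -> R[i].
Hypothesis hf : mult_fun f.
Hypothesis hg : mult_fun g.
Hypothesis hc : forall n : nat, (0 < n)%N -> g n = dconv f h n.
Local Notation nc := (@Normc.normc R).

Lemma hrec p j : prime p -> (1 <= j)%N ->
  h (p ^ j)%N = (g (p ^ j)%N - f (p ^ j)%N) - \sum_(1 <= i < j) f (p ^ i)%N * h (p ^ (j - i))%N.
Proof.
move=> pp j1.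
have := @hpow R f g h hc p j pp.
rewrite -(big_mkord xpredT (fun i => f (p ^ i)%N * h (p ^ (j - i))%N)).
rewrite big_ltn // big_nat_recr //= subn0 expn0 subnn expn0.
rewrite (@h1 R f g h hf hg hc); case: hf => -> _; rewrite mul1r mulr1 => ->.
by rewrite addrA !addrK.
Qed.

Lemma prime_local (p k K : nat) (s d b : R) :
  prime p -> 0 < d -> d < s -> b <= s ->
  2 <= p%:R `^ (s - d) ->
  (forall i, (1 <= i)%N -> nc (f (p ^ i)%N) <= 1/4 * ((p ^ i)%N%:R `^ d)) ->
  (forall i, (1 <= i)%N -> nc (g (p ^ i)%N) <= 1/4 * ((p ^ i)%N%:R `^ d)) ->
  \sum_(1 <= j < K) nc (h (p ^ j)%N) / ((p ^ j)%N%:R `^ s) <=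
   2 * \sum_(1 <= j < k.+1) nc (f (p ^ j)%N - g (p ^ j)%N) / p%:R `^ (j%:R * b)
   + 2 * (p%:R `^ ((s - d) * k.+1%:R))^-1.
Proof.
move=> pp d0 ds bs p2 hF hG.
have p1 : (1 <= p%:R :> R) by rewrite ler1n prime_gt0.
have pn0 : (p%:R != 0 :> R) by rewrite pnatr_eq0 -lt0n prime_gt0.
set P := p%:R `^ s; set Q := p%:R `^ d.
have P0 : 0 < P by apply: powR_gt0; lra.
have Q0 : 0 < Q by apply: powR_gt0; lra.
have PQ : P = p%:R `^ (s - d) * Q.
  by rewrite /P /Q -powRD ?subrK // pn0 implybT.
have hr1 : Q / P <= 1/2.
  rewrite ler_pdivrMr // PQ; nra.
have hr0 : 0 <= Q / P by apply: divr_ge0; apply: ltW.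
have Pj : forall j, (p ^ j)%N%:R `^ s = P ^+ j by move=> j; rewrite powR_nat_pow.
have Qj : forall j, (p ^ j)%N%:R `^ d = Q ^+ j by move=> j; rewrite powR_nat_pow.
have rj : forall j, (Q / P) ^+ j = Q ^+ j / P ^+ j by move=> j; rewrite exprMn exprVn.
have Pj0 : forall j, 0 < P ^+ j by move=> j; apply: exprn_gt0.
pose u j := nc (h (p ^ j)%N) / P ^+ j.
pose a i := nc (f (p ^ i)%N) / P ^+ i.
pose dd j := nc (g (p ^ j)%N - f (p ^ j)%N) / P ^+ j.
have := @local_bound R u a dd (1/4) (Q / P) k K.
have nc0 := @nc_ge0 R.
have Hu : forall j, 0 <= u j by move=> j; apply: divr_ge0 => //; apply: ltW.
have Ha : forall j, 0 <= a j by move=> j; apply: divr_ge0 => //; apply: ltW.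
have Hd : forall j, 0 <= dd j by move=> j; apply: divr_ge0 => //; apply: ltW.
have Haa : forall i, (1 <= i)%N -> a i <= 1/4 * (Q / P) ^+ i.
  move=> i i1; rewrite /a rj [X in _ <= X]mulrA ler_pM2r ?invr_gt0 //; rewrite -Qj; exact: hF.
have Hdd : forall j, (k < j)%N -> dd j <= 2 * (1/4) * (Q / P) ^+ j.
  move=> j kj; have j1 : (1 <= j)%N by apply: leq_ltn_trans kj.
  rewrite /dd rj [X in _ <= X]mulrA ler_pM2r ?invr_gt0 //.
  apply: le_trans (@nc_add R _ _) _; rewrite nc_opp -Qj.
  have := hF j j1; have := hG j j1; lra.
have Huu : forall j, (1 <= j)%N -> u j <= dd j + \sum_(1 <= i < j) a i * u (j - i)%N.
  move=> j j1; rewrite /u /dd (@hrec p j pp j1).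
  set S := \sum_(1 <= i < j) _.
  have Pj0' : 0 <= (P ^+ j)^-1 by rewrite invr_ge0 ltW.
  apply: le_trans (_ : (nc (g (p ^ j)%N - f (p ^ j)%N) + nc S) / P ^+ j <= _).
    by apply: ler_wpM2r => //; apply: le_trans (@nc_add R _ _) _; rewrite nc_opp.
  rewrite mulrDl lerD2l.
  apply: le_trans (ler_wpM2r Pj0' (@nc_sum R _ _ _ _)) _.
  rewrite mulr_suml; rewrite big_nat_cond [X in _ <= X]big_nat_cond.
  apply: ler_sum => i /andP[/andP[i1 ij] _].
  rewrite /a /u (@Normc.normcM R) mulrACA -invfM -exprD subnKC ?(ltnW ij) //.
pose e4 : R := 1/4; have H1 : 0 <= e4 <= e4.
  by rewrite lexx andbT /e4; lra.
have H2 : 0 <= Q / P <= 1/2 by apply/andP; split.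
move=> H; have {}H := H H1 H2 Hu Ha Hd Haa Hdd Huu.
rewrite (eq_bigr u); last by move=> j _; rewrite /u Pj.
apply: le_trans H _; apply: lerD.
  rewrite ler_pM2l ?ltr0n //; apply: ler_sum_nat => j /andP[j1 _].
  rewrite /dd -opprB nc_opp; apply: ler_wpM2l; first exact: nc0.
  rewrite lef_pV2 ?posrE ?powR_gt0 ?Pj0 ?(lt_le_trans ltr01 p1) //.
  rewrite powR_mul_nat -/P.
  have : p%:R `^ b <= P by apply: ler_powR.
  move=> Hb; apply: lerXn2r => //; rewrite nnegrE; exact: powR_ge0.
rewrite ler_pM2l ?ltr0n //.
have QP : Q / P = (p%:R `^ (s - d))^-1.
  by rewrite PQ invfM mulrCA divff ?mulr1 // lt0r_neq0.
by rewrite QP exprVn powRrM powR_mulrn ?powR_ge0.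
Qed.

End PrimeLocal.

Section Ident.
Variable R : realType.
Variables f g h : nat -> R[i].
Hypothesis hc : forall n : nat, (0 < n)%N -> g n = dconv f h n.

Lemma ident T :
  \sum_(1 <= n < T.+1) g n =
  \sum_(1 <= m < T.+1) h m * \sum_(1 <= d < T.+1 | (d * m <= T)%N) f d.
Proof.
have sa : forall n, (1 <= n < T.+1)%N -> g n =
    \sum_(1 <= d < T.+1) (if (d %| n)%N then f d * h (n %/ d)%N else 0).
  move=> n /andP[n1 nT]; rewrite hc // /dconv -big_mkcond /= -[RHS]big_filter.
  apply: perm_big; apply: uniq_perm.
  - exact: divisors_uniq.
  - by rewrite filter_uniq // iota_uniq.
  - move=> d; rewrite -dvdn_divisors // mem_filter mem_iota.
    case dn: (d %| n)%N => //=.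
    have := dvdn_gt0 n1 dn; have := dvdn_leq n1 dn; lia.
rewrite (eq_big_nat _ _ sa) exchange_big_nat /=.
rewrite [RHS](eq_bigr (fun m => \sum_(1 <= d < T.+1) (if (d * m <= T)%N then f d * h m else 0))); last first.
  by move=> m _; rewrite big_mkcond mulr_sumr; apply: eq_bigr => d _; case: ifP => _; rewrite ?mulr0 // mulrC.
rewrite [RHS]exchange_big_nat /=.
apply: eq_big_nat => d /andP[d1 dT].
rewrite -!big_mkcond /=.
rewrite -[LHS]big_filter -[RHS]big_filter.
have -> : [seq n <- index_iota 1 T.+1 | (d %| n)%N] =
  [seq (d * m)%N | m <- [seq m <- index_iota 1 T.+1 | (d * m <= T)%N]].
  apply: (irr_sorted_eq ltn_trans ltnn).
  - by apply: sorted_filter; [exact: ltn_trans | exact: iota_ltn_sorted].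
  - rewrite sorted_map; apply: (@sub_sorted _ ltn).
      by move=> x y xy /=; rewrite ltn_pmul2l.
    by apply: sorted_filter; [exact: ltn_trans | exact: iota_ltn_sorted].
  - move=> n; rewrite mem_filter mem_iota; apply/idP/idP.
    + move=> /andP[/dvdnP[m ->] /andP[h1 h2]]; apply/mapP; exists m.
        rewrite mem_filter mem_iota; apply/and3P; split; nia.
      by rewrite mulnC.
    + move/mapP => [m]; rewrite mem_filter mem_iota => /and3P[mT m1 m2] ->.
      rewrite dvdn_mulr //=; lia.
rewrite big_map; apply: eq_bigr => m _; by rewrite mulKn.
Qed.

End Ident.

Theorem theorem3 (R : realType) (f g h : nat -> R[i])
    (alpha beta delta sigma : R) (k : nat) :
  mult_fun f -> mult_fun g ->
  Sbound f alpha ->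
  (0 < k)%N -> strongly_pretentious beta k f g ->
  0 < delta -> little_o_pow f delta -> little_o_pow g delta ->
  (forall n : nat, (0 < n)%N -> g n = dconv f h n) ->
  1 / (k.+1)%:R + delta < sigma -> Num.max alpha beta <= sigma ->
  exists Y : R, 0 < Y /\ (Hhat_convergent h Y sigma -> Sbound g sigma).
Proof.
move=> hf hg [Cf hCf] k0 [BP hBP] d0 hof hog hc hs hmax.
have ha : alpha <= sigma by move: hmax; rewrite ge_max => /andP[].
have hb : beta <= sigma by move: hmax; rewrite ge_max => /andP[].
have k10 : (0 < k.+1%:R :> R) by rewrite ltr0n.
have sd1 : 1 < (sigma - delta) * k.+1%:R.
  by rewrite -ltr_pdivrMr // ltrBrDr.
have dls : delta < sigma.
  have H : 1 / k.+1%:R < sigma - delta by rewrite ltrBrDr.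
  by rewrite -subr_gt0; exact: lt_trans (divr_gt0 ltr01 k10) H.
set s := (sigma - delta) * k.+1%:R.
have [BZ hBZ] := @zeta_bound R s sd1.
have q0 : (0 : R) < 1/4 by lra.
have [N0f hN0f] := hof _ q0.
have [N0g hN0g] := hog _ q0.
set c : R := 2 `^ ((sigma - delta)^-1).
set N1 := maxn (maxn N0f N0g) (maxn 2 (Num.truncn c).+1).
have N12 : (2 <= N1)%N by rewrite /N1 !leq_max leqnn !orbT.
have N1f : (N0f <= N1)%N by rewrite /N1 !leq_max leqnn.
have N1g : (N0g <= N1)%N by rewrite /N1 !leq_max leqnn !orbT.
have N1c : c < N1%:R.
  have /andP[_ H] := truncn_itv (powR_ge0 2 ((sigma - delta)^-1)).
  by apply: lt_le_trans H _; rewrite ler_nat /N1 !leq_max leqnn !orbT.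
exists (N1%:R : R); split; first by rewrite ltr0n; apply: leq_trans _ N12.
move=> [BH hBH]; rewrite natrK in hBH.
have hp2 : forall p : nat, (N1 < p)%N -> 2 <= p%:R `^ (sigma - delta).
  move=> p N1p.
  have cp : c <= p%:R by apply: le_trans (ltW N1c) _; rewrite ler_nat ltnW.
  have -> : (2 : R) = c `^ (sigma - delta).
    by rewrite /c -powRrM mulVf ?powRr1 // subr_eq0 gt_eqF.
  apply: ge0_ler_powR => //; first by rewrite subr_ge0 ltW.
    by rewrite nnegrE powR_ge0.
  by rewrite nnegrE.
have ppow : forall p i, prime p -> (1 <= i)%N -> (p <= p ^ i)%N.
  by move=> p i pp i1; rewrite -{1}(expn1 p) leq_pexp2l // prime_gt0.
have hpF : forall p, prime p -> (N1 < p)%N -> forall i, (1 <= i)%N ->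
    Normc.normc (f (p ^ i)%N) <= 1/4 * ((p ^ i)%N%:R `^ delta).
  move=> p pp N1p i i1; apply: hN0f.
  by apply: leq_trans N1f (leq_trans (ltnW N1p) (ppow p i pp i1)).
have hpG : forall p, prime p -> (N1 < p)%N -> forall i, (1 <= i)%N ->
    Normc.normc (g (p ^ i)%N) <= 1/4 * ((p ^ i)%N%:R `^ delta).
  move=> p pp N1p i i1; apply: hN0g.
  by apply: leq_trans N1g (leq_trans (ltnW N1p) (ppow p i pp i1)).
pose a := fun m : nat => Normc.normc (h m) / (m%:R `^ sigma).
have a1 : a 1%N = 1.
  by rewrite /a (@h1 R f g h hf hg hc) Normc.normc1 powR1 divr1.
have a0 : forall m, 0 <= a m.
  by move=> m; apply: divr_ge0; [exact: nc_ge0 | exact: powR_ge0].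
have amul : forall m n, (0 < m)%N -> (0 < n)%N -> coprime m n -> a (m * n)%N = a m * a n.
  move=> m n m0 n0 cmn.
  rewrite /a (@hmul R f g h hf hg hc m n m0 n0 cmn) Normc.normcM natrM powRM ?ler0n //.
  by rewrite invfM mulrACA.
have aP : forall p j, a (p ^ j)%N = Normc.normc (h (p ^ j)%N) / p%:R `^ (j%:R * sigma).
  by move=> p j; rewrite /a powR_nat_pow powR_mul_nat.
set Ktot := expR (BH + 2 * BP + 2 * BZ).
have total : forall M, \sum_(1 <= m < M.+1) a m <= Ktot.
  move=> M.
  have E := @euler_aux R a a1 a0 amul M M.+1.
  have filt : [seq x <- iota 1 M | all (fun q => (q < M.+1)%N) (primes x)] = iota 1 M.
    apply/all_filterP; apply/allP => x; rewrite mem_iota => /andP[x1 xM].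
    apply/allP => q; rewrite mem_primes => /and3P[_ x0 qx].
    have := dvdn_leq x0 qx; lia.
  rewrite filt in E.
  have -> : \sum_(1 <= m < M.+1) a m = \sum_(m <- iota 1 M) a m.
    by rewrite /index_iota subn1.
  apply: le_trans E _.
  pose X := fun p : nat => \sum_(1 <= j < M.+1) a (p ^ j)%N.
  have X0 : forall p, 0 <= X p by move=> p; apply: sumr_ge0 => j _.
  rewrite (eq_bigr (fun p : 'I_M.+1 => 1 + X p)); last first.
    move=> p _; rewrite /X.
    have -> : iota 0 M.+1 = index_iota 0 M.+1 by rewrite /index_iota subn0.
    by rewrite big_ltn // expn0 a1.
  apply: le_trans (@prod_le_exp R _ _ _ _ (fun p : 'I_M.+1 => X0 p)) _.
  rewrite ler_expR.
  pose F' := fun p : nat => if prime p then X p else 0.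
  have F'0 : forall p, 0 <= F' p by move=> p; rewrite /F'; case: ifP.
  have -> : \sum_(p < M.+1 | prime p) X p = \sum_(0 <= p < M.+1) F' p.
    by rewrite big_mkcond /= -(big_mkord xpredT F').
  set L := (M.+1 + N1.+1)%N.
  apply: le_trans (@sum_range_le R 0 _ _ _ (leq_addr N1.+1 M.+1) F'0) _.
  have l1 : (0 <= N1.+1)%N by [].
  have l2 : (N1.+1 <= L)%N by apply: leq_addl.
  rewrite (big_cat_nat l1 l2) /= -addrA; apply: lerD.
    apply: le_trans (hBH M.+1).
    rewrite -(big_mkord (fun p => prime p) (fun p => \sum_(1 <= j < M.+1)
       Normc.normc (h (p ^ j)%N) / p%:R `^ (j%:R * sigma))).
    rewrite [X in _ <= X]big_mkcond /=; apply: ler_sum_nat => p _.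
    rewrite /F'; case: ifP => // _; rewrite /X le_eqVlt; apply/orP; left; apply/eqP.
    by apply: eq_bigr => j _; rewrite aP.
  pose Pt := fun p : nat => if prime p then
      \sum_(1 <= j < k.+1) Normc.normc (f (p ^ j)%N - g (p ^ j)%N) / p%:R `^ (j%:R * beta)
    else 0.
  have Pt0 : forall p, 0 <= Pt p.
    move=> p; rewrite /Pt; case: ifP => // _; apply: sumr_ge0 => j _.
    by apply: divr_ge0; [exact: nc_ge0 | exact: powR_ge0].
  have Z0 : forall n : nat, 0 <= (n%:R `^ s : R)^-1 by move=> n; rewrite invr_ge0 powR_ge0.
  apply: le_trans (_ : \sum_(N1.+1 <= p < L) (2 * Pt p + 2 * (p%:R `^ s)^-1) <= _).
    apply: ler_sum_nat => p /andP[N1p _].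
    rewrite /F' /Pt; case: ifP => pp; last first.
      by rewrite mulr0 add0r mulr_ge0.
    apply: (@prime_local R f g h hf hg hc p k M.+1 sigma delta beta pp d0 dls hb (hp2 p N1p) (hpF p pp N1p) (hpG p pp N1p)).
  rewrite big_split /= -!mulr_sumr; apply: lerD; apply: ler_wpM2l => //.
    apply: le_trans (@sum_lower_le R _ _ _ _ (leq0n N1.+1) Pt0) _.
    apply: le_trans (hBP L).
    by rewrite [X in _ <= X]big_mkcond /= big_mkord le_eqVlt; apply/orP; left; apply/eqP; apply: eq_bigr.
  apply: le_trans (@sum_lower_le R _ _ _ _ (isT : (1 <= N1.+1)%N) Z0) _.
  exact: hBZ.
exists (Cf * Ktot) => x x1.
have x0 : 0 <= x by apply: le_trans x1.
have Cf0 : 0 <= Cf.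
  have := hCf 1 (lexx 1); rewrite powR1 /= mulr1 => H.
  exact: le_trans (@nc_ge0 R _) H.
rewrite /Ssum (@ident R f g h hc).
set T := Num.truncn x.
have inner : forall m, (1 <= m < T.+1)%N ->
    \sum_(1 <= d < T.+1 | (d * m <= T)%N) f d = Ssum f (x / m%:R).
  move=> m /andP[m1 mT].
  have m0 : (0 < m%:R :> R) by rewrite ltr0n.
  have m1' : (1 <= m%:R :> R) by rewrite ler1n.
  have xm0 : 0 <= x / m%:R by apply: divr_ge0 => //; apply: ltW.
  rewrite /Ssum.
  have T'T : (Num.truncn (x / m%:R) <= T)%N.
    apply: le_truncn; rewrite ler_pdivrMr //; nra.
  rewrite [RHS](big_nat_widen _ _ _ _ _ (T'T : ((Num.truncn (x / m%:R)).+1 <= T.+1)%N)).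
  apply: eq_bigl => d /=.
  by rewrite ltnS truncn_ge_nat // ler_pdivlMr // -natrM -truncn_ge_nat.
rewrite (eq_big_nat _ _ (F2 := fun m => h m * Ssum f (x / m%:R))); last first.
  by move=> m H; rewrite inner.
apply: le_trans (@nc_sum R _ _ _ _) _.
apply: le_trans (_ : \sum_(1 <= m < T.+1) Cf * x `^ sigma * a m <= _).
  rewrite big_nat_cond [X in _ <= X]big_nat_cond; apply: ler_sum => m /andP[/andP[m1 mT] _].
  rewrite Normc.normcM.
  have m0 : (0 < m%:R :> R) by rewrite ltr0n.
  have xm1 : 1 <= x / m%:R.
    by rewrite ler_pdivlMr // mul1r -truncn_ge_nat // -ltnS.
  apply: le_trans (ler_wpM2l (@nc_ge0 R _) (hCf _ xm1)) _.
  have A1 : (x / m%:R) `^ alpha <= (x / m%:R) `^ sigma by apply: ler_powR.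
  have xs : (x / m%:R) `^ sigma = x `^ sigma / m%:R `^ sigma.
    rewrite powRM //; congr (_ * _).
    by rewrite -(powR_inv1 (ltW m0)) powRAC powR_inv1 // powR_ge0.
  rewrite xs in A1.
  apply: le_trans (_ : Normc.normc (h m) * (Cf * (x `^ sigma / m%:R `^ sigma)) <= _).
    by apply: ler_wpM2l; [exact: nc_ge0 | apply: ler_wpM2l].
  rewrite /a le_eqVlt; apply/orP; left; apply/eqP.
  ring.
rewrite -mulr_sumr.
apply: le_trans (ler_wpM2l _ (total T)) _.
  by apply: mulr_ge0 => //; exact: powR_ge0.
by rewrite mulrAC.
Qed.
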